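(* For every integer $d\ge1$, $$\rho(0,d)=\frac{1}{d\,\varphi(d)},\qquad \rho(d,2d)=\begin{cases}\rho(0,2d)&\text{if $d$ is odd},\\ 3\rho(0,2d)&\text{if $d$ is even}.\end{cases}$$
   Context: $\varphi$ is Euler's totient. For integers $a$ and $d\ge1$, $\rho(a,d)=A\sum_{t\ge1,\ t\equiv a\pmod d}r(t)$, where $A=\prod_p\bigl(1-\frac{1}{p(p-1)}\bigr)$ (product over primes) and $r(t)=\frac{1}{t^2}\prod_{p\mid t}\frac{p^2-1}{p^2-p-1}$; equivalently $\rho(a,d)$ is the average over primes $p$ of the proportion of elements of $\mathbb F_p^*$ whose index $[\mathbb F_p^*:\langle x\rangle]$ is $\equiv a\pmod d$. *)

(* Defs.v *)
From Stdlib Require Import Reals ZArith List.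
From Coquelicot Require Import Coquelicot.
From mathcomp Require ssrnat prime.
Open Scope R_scope.

Definition rfac (p : nat) : R :=
  (INR p ^ 2 - 1) / (INR p ^ 2 - INR p - 1).

Definition r (t : nat) : R :=
  / (INR t ^ 2) * fold_right (fun p acc => rfac p * acc) 1 (prime.primes t).

Definition A_partial (n : nat) : R :=
  fold_right (fun p acc => (1 - / (INR p * (INR p - 1))) * acc) 1
    (filter (fun p => prime.prime p) (seq 0 n)).

Definition ArtinA : R := real (Lim_seq A_partial).

Definition congr (t : nat) (a : Z) (d : nat) : bool :=
  Z.eqb (Z.modulo (Z.of_nat t - a) (Z.of_nat d)) 0.

Definition rho_term (a : Z) (d : nat) (t : nat) : R :=
  if (Nat.leb 1 t && congr t a d)%bool then r t else 0.

Definition rho (a : Z) (d : nat) : R := ArtinA * Series (rho_term a d).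

Definition phi (n : nat) : nat := prime.totient n.

(* Main.v *)
Require Import Defs.
From Stdlib Require Import Reals ZArith List Lia Lra FinFun Permutation.
From Coquelicot Require Import Coquelicot.
From mathcomp Require ssreflect ssrfun ssrbool eqtype ssrnat seq div prime zify.

Module M.
Import ssreflect ssrfun ssrbool eqtype ssrnat seq div prime zify.
Open Scope R_scope.

Definition lsum {A} (f : A -> R) (l : list A) : R :=
  fold_right (fun x acc => f x + acc) 0 l.

Lemma lsum_app {A} (f : A -> R) l1 l2 : lsum f (l1 ++ l2)%list = lsum f l1 + lsum f l2.
Proof. elim: l1 => [|x l IH] /=; rewrite /lsum /=; [lra|]. rewrite -/(lsum f _) IH /lsum; lra. Qed.

Lemma lsum_ext {A} (f g : A -> R) l : (forall x, In x l -> f x = g x) -> lsum f l = lsum g l.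
Proof.
elim: l => [|x l IH] H //=. rewrite /lsum /= -!/(lsum _ _) H; [|by left].
by rewrite IH // => y Hy; apply H; right.
Qed.

Lemma lsum_map {A B} (f : B -> R) (g : A -> B) l : lsum f (List.map g l) = lsum (fun x => f (g x)) l.
Proof. elim: l => [|x l IH] //=. rewrite /lsum /= -!/(lsum _ _) IH //. Qed.

Lemma lsum_flat_map {A B} (f : B -> R) (F : A -> list B) l :
  lsum f (flat_map F l) = lsum (fun x => lsum f (F x)) l.
Proof. elim: l => [|x l IH] //. have -> : flat_map F (x :: l) = (F x ++ flat_map F l)%list by []. rewrite lsum_app IH //. Qed.

Lemma lsum_scal {A} (f : A -> R) c l : lsum (fun x => c * f x) l = c * lsum f l.
Proof. elim: l => [|x l IH] /=; rewrite /lsum /=; [lra|]. rewrite -!/(lsum _ _) IH; lra. Qed.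

Lemma lsum_nonneg {A} (f : A -> R) l : (forall x, 0 <= f x) -> 0 <= lsum f l.
Proof. move=> H; elim: l => [|x l IH] /=; rewrite /lsum /=; [lra|]. rewrite -!/(lsum _ _). by have := H x; lra. Qed.

Lemma lsum_le_incl (f : nat -> R) (l1 l2 : list nat) :
  (forall x, 0 <= f x) -> NoDup l1 ->
  (forall x, In x l1 -> f x <> 0 -> In x l2) -> lsum f l1 <= lsum f l2.
Proof.
move=> Hf Hnd; elim: l1 l2 Hnd => [|x l IH] l2 Hnd Hin.
  by rewrite /lsum /=; apply: lsum_nonneg.
inversion Hnd as [|? ? Hx Hl]; subst.
change (lsum f (x :: l)) with (f x + lsum f l).
case: (Req_dec (f x) 0) => Hfx.
  rewrite Hfx Rplus_0_l; apply: IH => // y Hy Hfy; apply: Hin => //; by right.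
have [a [b Hab]] := in_split x l2 (Hin x (or_introl erefl) Hfx).
subst l2; rewrite lsum_app; change (lsum f (x :: b)) with (f x + lsum f b).
have : lsum f l <= lsum f (a ++ b).
  apply: IH => // y Hy Hfy.
  have := Hin y (or_intror Hy) Hfy; rewrite !in_app_iff /= => -[H1|[H1|H1]]; auto.
  by subst y.
rewrite lsum_app; lra.
Qed.

Definition lprod {A} (f : A -> R) (l : list A) : R :=
  fold_right (fun x acc => f x * acc) 1 l.

Lemma lprod_app {A} (f : A -> R) l1 l2 : lprod f (l1 ++ l2)%list = lprod f l1 * lprod f l2.
Proof. elim: l1 => [|x l IH] /=; rewrite /lprod /=; [lra|]. rewrite -/(lprod f _) IH /lprod; lra. Qed.

Lemma lprod_ext {A} (f g : A -> R) l : (forall x, In x l -> f x = g x) -> lprod f l = lprod g l.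
Proof.
elim: l => [|x l IH] H //=. rewrite /lprod /= -!/(lprod _ _) H; [|by left].
by rewrite IH // => y Hy; apply H; right.
Qed.

Lemma lprod_mult {A} (f g : A -> R) l : lprod (fun x => f x * g x) l = lprod f l * lprod g l.
Proof. elim: l => [|x l IH] /=; rewrite /lprod /=; [lra|]. rewrite -!/(lprod _ _) IH; lra. Qed.

Lemma lprod_perm {A} (f : A -> R) l1 l2 : Permutation l1 l2 -> lprod f l1 = lprod f l2.
Proof.
elim => [|x l l' _ IH|x y l|l l' l'' _ IH1 _ IH2] //=; rewrite /lprod /= -!/(lprod _ _).
- by rewrite IH.
- lra.
- by rewrite IH1 IH2.
Qed.

Lemma lprod_le (f g : nat -> R) l : (forall x, In x l -> 0 <= f x <= g x) -> lprod f l <= lprod g l.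
Proof.
elim: l => [|x l IH] H /=; rewrite /lprod /=; [lra|]. rewrite -!/(lprod _ _).
have Hx := H x (or_introl erefl).
have Hl : forall y, In y l -> 0 <= f y <= g y by move=> y Hy; apply H; right.
have H0 : 0 <= lprod f l.
  clear IH H Hx; elim: l Hl => [|z l IH] Hl; rewrite /lprod /=; [lra|]. rewrite -/(lprod _ _).
  apply Rmult_le_pos; [exact: (proj1 (Hl z (or_introl erefl)))|]. apply IH => y Hy; apply Hl; by right.
apply Rmult_le_compat; try lra; auto.
Qed.

Lemma lprod_lim (F : nat -> nat -> R) (G : nat -> R) l :
  (forall x, In x l -> is_lim_seq (fun K => F K x) (G x)) ->
  is_lim_seq (fun K => lprod (F K) l) (lprod G l).
Proof.
elim: l => [|x l IH] H /=; rewrite /lprod /=. apply is_lim_seq_const.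
rewrite -/(lprod G l). apply: is_lim_seq_ext.
  move=> K; by rewrite -/(lprod (F K) l).
apply: is_lim_seq_mult'; first by apply H; left.
apply IH => y Hy; apply H; by right.
Qed.


Lemma In_mem (x : nat) (s : seq nat) : In x s <-> x \in s.
Proof.
elim: s => [|y s IH]; first by split.
rewrite in_cons; split.
  move=> [->|H]; first by rewrite eqxx.
  by apply/orP; right; apply/IH.
case/orP => [/eqP ->|H]; first by left.
by right; apply/IH.
Qed.

Lemma uniq_NoDup (s : seq nat) : uniq s -> NoDup s.
Proof.
elim: s => [|y s IH] /=; first by constructor.
case/andP => H1 H2; constructor; last by auto.
by rewrite In_mem; apply/negP.
Qed.

Lemma decomp p m : prime p -> (0 < m)%N ->
  exists u, (0 < u)%N /\ ~~ (p %| u) /\ m = (p ^ logn p m * u)%N.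
Proof.
move=> pp m0; have [u Hc Hm] := pfactor_coprime pp m0.
exists u; split; last split.
- move: m0; rewrite Hm muln_gt0 => /andP[] //.
- by rewrite -prime_coprime.
- by rewrite mulnC {1}Hm.
Qed.

Lemma logn_other q p k u : prime q -> prime p -> q <> p -> (0 < u)%N ->
  logn q (p ^ k * u)%N = logn q u.
Proof.
move=> pq pp qp u0. rewrite lognM ?expn_gt0 ?(prime_gt0 pp) //. rewrite lognX (logn_prime q pp).
have -> : (q == p) = false by apply/eqP.
by rewrite muln0 add0n.
Qed.

Lemma logn_self p k u : prime p -> ~~ (p %| u) -> (0 < u)%N -> logn p (p ^ k * u)%N = k.
Proof.
move=> pp pu u0. rewrite lognM ?expn_gt0 ?(prime_gt0 pp) //. rewrite (pfactorK k pp) logn_coprime ?addn0 //.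
by rewrite prime_coprime.
Qed.

Lemma dvd_other q p k u : prime q -> prime p -> q <> p -> q %| (p ^ k * u)%N -> q %| u.
Proof.
move=> pq pp qp. rewrite Euclid_dvdM // Euclid_dvdX // dvdn_prime2 //.
have -> : (q == p) = false by apply/eqP.
by [].
Qed.

Lemma INR_expn p k : INR (p ^ k)%N = INR p ^ k.
Proof. elim: k => [|k IH]; first by rewrite expn0. by rewrite expnS mult_INR IH. Qed.

Lemma INR_muln a b : INR (a * b)%N = INR a * INR b.
Proof. exact: mult_INR. Qed.

Definition c (p k : nat) : R :=
  match k with 0 => 1 | _ => rfac p * (/ (INR p ^ 2)) ^ k end.

Definition fprimes (s : list nat) : R := fold_right (fun p acc => rfac p * acc) 1 s.

Lemma fprimes_lprod s : fprimes s = lprod rfac s.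
Proof. by []. Qed.

Lemma INR_prime_ge2 p : prime p -> 2 <= INR p.
Proof. move=> pp; have := prime_gt1 pp => /ltP H. apply: (le_INR 2); lia. Qed.
Arguments INR_prime_ge2 {p}.

Lemma r_mul p k u : prime p -> (0 < u)%N -> ~~ (p %| u) -> r (p ^ k * u)%N = c p k * r u.
Proof.
move=> pp u0 pu. case: k => [|k].
  by rewrite expn0 mul1n /= Rmult_1_l.
have Hperm : Permutation (primes (p ^ k.+1 * u)%N) (p :: primes u).
  apply: NoDup_Permutation; first exact/uniq_NoDup/primes_uniq.
    apply/uniq_NoDup => /=; rewrite primes_uniq andbT mem_primes negb_and; apply/orP; right.
    by rewrite negb_and pu orbT.
  move=> x; rewrite !In_mem primesM; last by []; last by rewrite expn_gt0 (prime_gt0 pp).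
  by rewrite primesX // primes_prime // in_cons in_cons in_nil orbF.
rewrite /r -!/(fprimes _) !fprimes_lprod (lprod_perm _ _ _ Hperm).
have Hc : c p k.+1 = rfac p * / (INR p ^ k.+1) ^ 2.
  rewrite /c pow_inv -!pow_mult. do 3 f_equal. lia.
rewrite Hc INR_muln INR_expn.
change (lprod rfac (p :: primes u)) with (rfac p * lprod rfac (primes u)).
have H2 := INR_prime_ge2 pp.
have Hu : 0 < INR u by apply: lt_0_INR; apply/ltP.
have Hpk : 0 < INR p ^ k.+1 by apply: pow_lt; lra.
field; split; apply: Rgt_not_eq; [exact Hu|exact Hpk].
Qed.

Lemma rfac_nonneg p : prime p -> 0 <= rfac p.
Proof.
move=> pp; have H2 := INR_prime_ge2 pp. rewrite /rfac.
apply: Rle_mult_inv_pos; nra.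
Qed.

Lemma r_nonneg t : (0 < t)%N -> 0 <= r t.
Proof.
move=> t0. rewrite /r -/(fprimes _) fprimes_lprod.
have Ht : 0 < INR t by apply: lt_0_INR; apply/ltP.
apply: Rmult_le_pos; first by apply: Rlt_le; apply: Rinv_0_lt_compat; nra.
have : forall x, In x (primes t) -> prime x by move=> x /In_mem; rewrite mem_primes => /andP[].
elim: (primes t) => [|x s IH] H /=; rewrite /lprod /=; first lra.
rewrite -/(lprod _ _); apply: Rmult_le_pos; first by apply: rfac_nonneg; apply: H; left.
by apply: IH => y Hy; apply: H; right.
Qed.

Lemma c_nonneg p k : prime p -> 0 <= c p k.
Proof.
move=> pp; case: k => [|k]; rewrite /c; first lra.
apply: Rmult_le_pos; first exact: rfac_nonneg.
apply: pow_le; apply: Rlt_le; apply: Rinv_0_lt_compat; have := INR_prime_ge2 pp; nra.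
Qed.

Arguments dvd_other {q p k u}.
Arguments logn_self {p} k {u}.
Arguments logn_other {q p} k {u}.
Arguments decomp {p m}.

Lemma NoDup_flat_map {A B} (F : A -> list B) (l : list A) :
  NoDup l -> (forall k, In k l -> NoDup (F k)) ->
  (forall k k' x, In k l -> In k' l -> In x (F k) -> In x (F k') -> k = k') ->
  NoDup (flat_map F l).
Proof.
elim: l => [|a l IH] Hl HF Hd /=; first by constructor.
inversion Hl as [|? ? Ha Hl']; subst.
apply: NoDup_app.
- by apply: HF; left.
- apply: IH => //; first by move=> k Hk; apply: HF; right.
  by move=> k k' x Hk Hk'; apply: Hd; right.
- move=> x Hx /in_flat_map [k [Hk Hxk]].
  have Hak : a = k by apply: (Hd a k x); [left|right|..].
  by subst k.
Qed.

Section Tset.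
Variables d K : nat.

Definition ks (p : nat) : list nat := List.seq (logn p d) (K.+1 - logn p d).

Fixpoint Tl (ps : list nat) : list nat :=
  match ps with
  | nil => (1%N :: nil)
  | p :: ps' => flat_map (fun k => List.map (fun u => (p ^ k * u)%N) (Tl ps')) (ks p)
  end.

Definition Dfold (m : nat) (ps : list nat) : nat :=
  fold_right (fun q acc => (q ^ logn q m * acc)%N) 1%N ps.

Definition allprime (ps : list nat) := forall q, In q ps -> prime q.

Lemma allprime_tail p ps : allprime (p :: ps) -> allprime ps.
Proof. by move=> H q Hq; apply: H; right. Qed.
Arguments allprime_tail {p ps}.

Lemma Tl_prop ps : allprime ps -> NoDup ps -> forall u, In u (Tl ps) ->
  (0 < u)%N /\ (forall q, prime q -> q %| u -> In q ps) /\ (Dfold d ps %| u).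
Proof.
elim: ps => [|p ps IH] Hpr Hnd u /=.
  move=> [<-|//]; split=> //; split=> // q pq /(dvdn_leq (isT : (0 < 1)%N)).
  by have := prime_gt1 pq; lia.
inversion Hnd as [|? ? Hp Hnd']; subst.
move/in_flat_map => [k [Hk /in_map_iff [v [<- Hv]]]].
have pp : prime p by apply: Hpr; left.
have [v0 [Hvq Hvd]] := IH (allprime_tail Hpr) Hnd' v Hv.
split; first by rewrite muln_gt0 expn_gt0 (prime_gt0 pp).
split.
  move=> q pq; case: (eqVneq q p) => [->|qp]; first by left.
  move=> /(dvd_other pq pp) H; right; apply: Hvq => //; apply: H; exact/eqP.
apply: dvdn_mul => //; apply: dvdn_exp2l.
move: Hk; rewrite /ks => /in_seq; lia.
Qed.

Arguments Tl_prop {ps}.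

Lemma Tl_notdvd p ps : allprime (p :: ps) -> NoDup (p :: ps) -> forall u, In u (Tl ps) -> ~~ (p %| u).
Proof.
move=> Hpr Hnd u Hu; inversion Hnd as [|? ? Hp Hnd']; subst.
have [_ [Hq _]] := Tl_prop (allprime_tail Hpr) Hnd' _ Hu.
apply/negP => Hpu; apply: Hp; apply: Hq => //; apply: Hpr; by left.
Qed.
Arguments Tl_notdvd {p ps}.

Lemma Tl_NoDup ps : allprime ps -> NoDup ps -> NoDup (Tl ps).
Proof.
elim: ps => [|p ps IH] Hpr Hnd /=; first by constructor; [|constructor].
have Hnd0 := Hnd; inversion Hnd as [|? ? Hp Hnd']; subst.
have pp : prime p by apply: Hpr; left.
apply: NoDup_flat_map; first exact: seq_NoDup.
  move=> k _; apply: Injective_map_NoDup; last exact: IH (allprime_tail Hpr) Hnd'.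
  move=> x y H. have h0 : (0 < p ^ k)%N by rewrite expn_gt0 (prime_gt0 pp).
  by apply/eqP; rewrite -(eqn_pmul2l h0) H.
move=> k k' x _ _ /in_map_iff [u [<- Hu]] /in_map_iff [u' [Hx Hu']].
have [u0 _] := Tl_prop (allprime_tail Hpr) Hnd' _ Hu.
have [u0' _] := Tl_prop (allprime_tail Hpr) Hnd' _ Hu'.
have := logn_self k pp (Tl_notdvd Hpr Hnd0 _ Hu) u0.
by rewrite -Hx logn_self // (Tl_notdvd Hpr Hnd0 _ Hu').
Qed.


Lemma r1 : r 1 = 1.
Proof. rewrite /r /=. field. Qed.

Lemma Tl_sum ps : allprime ps -> NoDup ps ->
  lsum r (Tl ps) = lprod (fun p => lsum (c p) (ks p)) ps.
Proof.
elim: ps => [|p ps IH] Hpr Hnd.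
  by rewrite /= /lsum /lprod /= r1; lra.
have Hnd0 := Hnd; inversion Hnd as [|? ? Hp Hnd']; subst.
have pp : prime p by apply: Hpr; left.
change (Tl (p :: ps)) with (flat_map (fun k => List.map (fun u => (p ^ k * u)%N) (Tl ps)) (ks p)).
rewrite lsum_flat_map.
rewrite (lsum_ext _ (fun k => c p k * lsum r (Tl ps))).
  rewrite (lsum_ext _ (fun k => lsum r (Tl ps) * c p k)); last by move=> *; lra.
  rewrite lsum_scal (IH (allprime_tail Hpr) Hnd').
  change (lprod (fun p0 => lsum (c p0) (ks p0)) (p :: ps)) with
    (lsum (c p) (ks p) * lprod (fun p0 => lsum (c p0) (ks p0)) ps); lra.
move=> k _; rewrite lsum_map -lsum_scal; apply: lsum_ext => u Hu.
have [u0 _] := Tl_prop (allprime_tail Hpr) Hnd' _ Hu.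
by rewrite r_mul // (Tl_notdvd Hpr Hnd0 _ Hu).
Qed.

Lemma Tl_mem ps : allprime ps -> NoDup ps -> forall t, (0 < t)%N ->
  (forall q, prime q -> q %| t -> In q ps) ->
  (forall q, In q ps -> (logn q d <= logn q t <= K)%N) -> In t (Tl ps).
Proof.
elim: ps => [|p ps IH] Hpr Hnd t t0 Hq Hl.
  case: (ltngtP t 1) => [|Ht|->]; [lia| |by left].
  by exfalso; apply: (Hq (pdiv t)); [apply: pdiv_prime|apply: pdiv_dvd].
have Hnd0 := Hnd; inversion Hnd as [|? ? Hp Hnd']; subst.
have pp : prime p by apply: Hpr; left.
have [u [u0 [pu Ht]]] := decomp pp t0.
change (Tl (p :: ps)) with (flat_map (fun k => List.map (fun u => (p ^ k * u)%N) (Tl ps)) (ks p)).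
apply/in_flat_map; exists (logn p t); split.
  rewrite /ks; apply/in_seq; have := Hl p (or_introl erefl); lia.
apply/in_map_iff; exists u; split; first by rewrite -Ht.
apply: IH => //; first exact: allprime_tail Hpr.
- move=> q pq qu. have : In q (p :: ps).
    by apply: Hq => //; rewrite Ht dvdn_mull.
  case=> // Hqp; subst q; by rewrite qu in pu.
- move=> q Hqin; have pq : prime q by apply: Hpr; right.
  have qp : q <> p by move=> E; subst q.
  rewrite -(logn_other (logn p t) pq pp qp u0) -Ht; apply: Hl; by right.
Qed.

End Tset.
Arguments allprime_tail {p ps}.
Arguments Tl_prop {d K ps}.
Arguments Tl_notdvd {d K p ps}.
Arguments Tl_NoDup {d K ps}.
Arguments Tl_sum {d K ps}.
Arguments Tl_mem {d K ps}.

Lemma Dfold_eq ps : allprime ps -> NoDup ps -> forall m, (0 < m)%N ->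
  (forall q, prime q -> q %| m -> In q ps) -> Dfold m ps = m.
Proof.
elim: ps => [|p ps IH] Hpr Hnd m m0 Hq.
  rewrite /Dfold /=. case: (ltngtP m 1) => [|Ht|->]; [lia| |by []].
  by exfalso; apply: (Hq (pdiv m)); [apply: pdiv_prime|apply: pdiv_dvd].
inversion Hnd as [|? ? Hp Hnd']; subst.
have pp : prime p by apply: Hpr; left.
have [u [u0 [pu Ht]]] := decomp pp m0.
rewrite /Dfold /= -/(Dfold m ps).
have -> : Dfold m ps = Dfold u ps.
  rewrite /Dfold; elim: ps {IH Hq Hnd} Hpr Hp Hnd' => [|q ps IH2] Hpr Hp Hnd' //=.
  have pq : prime q by apply: Hpr; right; left.
  have qp : q <> p by move=> E; subst q; apply: Hp; left.
  rewrite {1}Ht (logn_other (logn p m) pq pp qp u0) IH2 //.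
  - by move=> z Hz; apply: Hpr; case: Hz => [<-|Hz]; [left|right; right].
  - by move=> Hz; apply: Hp; right.
  - by inversion Hnd'.
rewrite (IH (allprime_tail Hpr) Hnd' u u0); first by rewrite -Ht.
- move=> q pq qu. have : In q (p :: ps).
    by apply: Hq => //; rewrite Ht dvdn_mull.
  case=> // Hqp; subst q; by rewrite qu in pu.
Qed.

Arguments Dfold_eq {ps}.

Definition h (p e : nat) : R :=
  match e with 0 => 1 | _ => / (INR (p ^ e)%N * INR (p.-1 * p ^ e.-1)%N) end.

Lemma h_totient p k : prime p -> h p k * (INR (p ^ k)%N * INR (totient (p ^ k))) = 1.
Proof.
move=> pp; case: k => [|k].
  by rewrite /h expn0 /=; field.
rewrite totient_pfactor //. rewrite /h. field.
have H2 := INR_prime_ge2 pp.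
split; apply: not_0_INR; apply/eqP; rewrite -lt0n ?muln_gt0 expn_gt0 (prime_gt0 pp) //.
by rewrite andbT -subn1 subn_gt0 (prime_gt1 pp).
Qed.

Lemma H_fold ps : allprime ps -> NoDup ps -> forall m, (0 < m)%N ->
  (forall q, prime q -> q %| m -> In q ps) ->
  lprod (fun q => h q (logn q m)) ps * (INR m * INR (totient m)) = 1.
Proof.
elim: ps => [|p ps IH] Hpr Hnd m m0 Hq.
  rewrite /lprod /=. case: (ltngtP m 1) => [|Ht|->]; [lia| |by rewrite /=; field].
  by exfalso; apply: (Hq (pdiv m)); [apply: pdiv_prime|apply: pdiv_dvd].
inversion Hnd as [|? ? Hp Hnd']; subst.
have pp : prime p by apply: Hpr; left.
have [u [u0 [pu Ht]]] := decomp pp m0.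
change (lprod (fun q => h q (logn q m)) (p :: ps)) with
  (h p (logn p m) * lprod (fun q => h q (logn q m)) ps).
have -> : lprod (fun q => h q (logn q m)) ps = lprod (fun q => h q (logn q u)) ps.
  apply: lprod_ext => q Hqin. have pq : prime q by apply: Hpr; right.
  have qp : q <> p by move=> E; subst q.
  by rewrite {1}Ht (logn_other (logn p m) pq pp qp u0).
have Hu : lprod (fun q => h q (logn q u)) ps * (INR u * INR (totient u)) = 1.
  apply: (IH (allprime_tail Hpr) Hnd' u u0).
  move=> q pq qu. have : In q (p :: ps).
    by apply: Hq => //; rewrite Ht dvdn_mull.
  case=> // Hqp; subst q; by rewrite qu in pu.
have Hc : coprime (p ^ logn p m) u by rewrite coprimeXl // prime_coprime.
have Hh := h_totient _ (logn p m) pp.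
rewrite {2 3}Ht totient_coprime // !INR_muln.
rewrite -(Rmult_1_l 1) -{1}Hh -Hu.
ring.
Qed.

Arguments H_fold {ps}.

Definition qq (p : nat) : R := / (INR p ^ 2).
Definition fac (p : nat) : R := 1 - / (INR p * (INR p - 1)).
Definition loc (p e : nat) : R :=
  match e with 0 => 1 + rfac p * qq p / (1 - qq p) | _ => rfac p * qq p ^ e / (1 - qq p) end.

Lemma qq_bounds p : prime p -> 0 < qq p < 1.
Proof.
move=> pp; have H2 := INR_prime_ge2 pp; rewrite /qq; split.
  apply: Rinv_0_lt_compat; nra.
rewrite -Rinv_1; apply: Rinv_lt_contravar; nra.
Qed.

Lemma fac_loc p e : prime p -> fac p * loc p e = h p e.
Proof.
move=> pp; have H2 := INR_prime_ge2 pp.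
have Hp1 : INR p.-1 = INR p - 1.
  have := prime_gt0 pp; case: p {pp H2} => [//|p] _. have -> : p.+1.-1 = p by [].
  rewrite S_INR; lra.
rewrite /fac /loc /h /rfac /qq; case: e => [|e].
  field; nra.
rewrite INR_muln Hp1 !INR_expn.
have E1 : (/ INR p ^ 2) ^ e.+1 = / (INR p ^ e.+1) ^ 2.
  by rewrite pow_inv -!pow_mult Nat.mul_comm.
rewrite E1. change (INR p ^ e.+1) with (INR p * INR p ^ e). change (e.+1.-1) with e.
have : 0 < INR p ^ e by apply: pow_lt; lra.
move=> HX. field. split; [nra|]. split; [nra|]. split; [nra|]. nra.
Qed.

Lemma geo p e j : prime p -> (0 < e + j)%N ->
  lsum (c p) (List.seq e j) = loc p e - rfac p * qq p ^ (e + j) / (1 - qq p).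
Proof.
move=> pp; have [q0 q1] := qq_bounds _ pp.
elim: j => [|j IH] H.
  rewrite addn0 /lsum /=; case: e H => [//|e] _ /=; field; lra.
rewrite seq_S lsum_app.
case: (posnP (e + j)) => Hej.
  have e0 : e = 0%N by lia. have j0 : j = 0%N by lia. subst e j.
  rewrite /lsum /= /loc; field; lra.
rewrite IH //. rewrite /lsum /=.
have -> : c p (e + j) = rfac p * qq p ^ (e + j).
  by case: (e + j)%N Hej => [//|n] _ /=.
have -> : (e + j.+1)%N = (e + j).+1 by lia.
rewrite /=. field; lra.
Qed.


Definition PS (n : nat) : list nat := List.filter (fun p => prime p) (List.seq 0 n).

Lemma A_eq n : A_partial n = lprod fac (PS n).
Proof. reflexivity. Qed.

Lemma PS_In q n : In q (PS n) <-> prime q /\ (q < n)%N.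
Proof.
rewrite /PS filter_In in_seq; split.
  by move=> [H1 H2]; split => //; apply/ltP; lia.
by move=> [H1 /ltP H2]; split => //; lia.
Qed.

Lemma PS_allprime n : allprime (PS n).
Proof. by move=> q /PS_In []. Qed.

Lemma PS_NoDup n : NoDup (PS n).
Proof. apply: NoDup_filter; apply: seq_NoDup. Qed.

Lemma lprod_PS_S (f : nat -> R) n :
  lprod f (PS n.+1) = lprod f (PS n) * (if prime n then f n else 1).
Proof.
rewrite /PS seq_S filter_app lprod_app /=.
by case: (prime n); rewrite /lprod /=; lra.
Qed.

Lemma fac_bounds p : prime p -> 1/2 <= fac p <= 1.
Proof.
move=> pp; have H2 := INR_prime_ge2 pp; rewrite /fac; split.
  have : / (INR p * (INR p - 1)) <= / 2.
    apply: Rinv_le_contravar; nra.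
  lra.
have : 0 < / (INR p * (INR p - 1)) by apply: Rinv_0_lt_compat; nra.
lra.
Qed.

Lemma A_S n : A_partial n.+1 = A_partial n * (if prime n then fac n else 1).
Proof. by rewrite !A_eq lprod_PS_S. Qed.

Lemma A_lower3 n : 1/4 + / (2 * (INR n + 2)) <= A_partial (n + 3).
Proof.
elim: n => [|n IH].
  have -> : A_partial (0 + 3) = 1/2.
    rewrite /A_partial /=. field.
  rewrite /=; lra.
have -> : (n.+1 + 3 = (n + 3).+1)%N by lia.
rewrite A_S S_INR.
have Hn : 0 <= INR n := pos_INR n.
case: (prime (n + 3)) => /=.
- rewrite /fac.
  have -> : INR (n + 3)%N = INR n + 3.
    change (INR (n + 3)%N) with (INR (Nat.add n 3)); rewrite plus_INR; simpl; lra.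
  have E : (1 / 4 + / (2 * (INR n + 2))) * (1 - / ((INR n + 3) * (INR n + 3 - 1)))
         - (1 / 4 + / (2 * (INR n + 1 + 2)))
         = (INR n) / (4 * (INR n + 3) * (INR n + 2) ^ 2).
    field; lra.
  have : 0 <= (INR n) / (4 * (INR n + 3) * (INR n + 2) ^ 2).
    apply: Rle_mult_inv_pos => //; nra.
  have : 0 <= 1 - / ((INR n + 3) * (INR n + 3 - 1)).
    have : / ((INR n + 3) * (INR n + 3 - 1)) <= 1.
      rewrite -Rinv_1; apply: Rinv_le_contravar; nra.
    lra.
  move=> H1 H2.
  have : (1 / 4 + / (2 * (INR n + 2))) * (1 - / ((INR n + 3) * (INR n + 3 - 1)))
       <= A_partial (n + 3) * (1 - / ((INR n + 3) * (INR n + 3 - 1))).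
    by apply: Rmult_le_compat_r.
  lra.
- have : / (2 * (INR n + 1 + 2)) <= / (2 * (INR n + 2)).
    apply: Rinv_le_contravar; lra.
  lra.
Qed.

Lemma A_small n : (n < 3)%N -> A_partial n = 1.
Proof. by case: n => [|[|[|]]] //= _; rewrite /A_partial /=. Qed.

Lemma A_ge n : 1/4 <= A_partial n.
Proof.
case: (ltnP n 3) => Hn; first by rewrite A_small //; lra.
have -> : n = ((n - 3) + 3)%N by lia.
have := A_lower3 (n - 3).
have : 0 < / (2 * (INR (n - 3) + 2)).
  apply: Rinv_0_lt_compat; have := pos_INR (n - 3); lra.
lra.
Qed.

Lemma A_decr n : A_partial n.+1 <= A_partial n.
Proof.
rewrite A_S. have := A_ge n. case E: (prime n) => /= H; last lra.
have := fac_bounds _ E. nra.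
Qed.


Lemma A_decr_le n k : A_partial (k + n) <= A_partial n.
Proof.
elim: k => [|k IH]; first by rewrite add0n; lra.
rewrite addSn; have := A_decr (k + n); lra.
Qed.

Lemma Artin_lim : is_lim_seq A_partial ArtinA.
Proof.
have Hex : ex_finite_lim_seq A_partial.
  apply: (ex_finite_lim_seq_decr _ (1/4)); [exact: A_decr|exact: A_ge].
have [l Hl] := Hex.
have E := is_lim_seq_unique _ _ Hl.
by rewrite /ArtinA E /=.
Qed.

Lemma Artin_le n : ArtinA <= A_partial n.
Proof.
have H1 : is_lim_seq (fun k => A_partial (k + n)) ArtinA
  by exact: (proj1 (is_lim_seq_incr_n A_partial n ArtinA) Artin_lim).
have := is_lim_seq_le _ _ _ _ (fun k => A_decr_le n k) H1 (is_lim_seq_const (A_partial n)).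
by [].
Qed.

Lemma Artin_ge : 1/4 <= ArtinA.
Proof.
have := is_lim_seq_le _ _ _ _ A_ge (is_lim_seq_const (1/4)) Artin_lim.
by [].
Qed.

Lemma sumf_mono (a : nat -> R) N k : (forall n, 0 <= a n) ->
  sum_f_R0 a N <= sum_f_R0 a (k + N).
Proof.
move=> Ha; elim: k => [|k IH]; first by rewrite add0n; lra.
rewrite addSn /=; have := Ha (k + N).+1; lra.
Qed.

Lemma sumf_lsum (a : nat -> R) N : sum_f_R0 a N = lsum a (List.seq 0 N.+1).
Proof.
elim: N => [|N IH]; first by rewrite /lsum /=; lra.
rewrite seq_S lsum_app -IH /=. rewrite /lsum /=; lra.
Qed.

Lemma partial_le_series (a : nat -> R) N : (forall n, 0 <= a n) -> ex_series a ->
  sum_f_R0 a N <= Series a.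
Proof.
move=> Ha [l Hl].
have Hl' : is_lim_seq (sum_n a) l by exact: Hl.
have E : Series a = l by apply: is_series_unique.
rewrite E.
have H1 : is_lim_seq (fun k => sum_n a (k + N)) l by exact: (proj1 (is_lim_seq_incr_n (sum_n a) N l) Hl').
have := is_lim_seq_le (fun _ => sum_f_R0 a N) _ _ _ _ (is_lim_seq_const _) H1.
apply => k; rewrite sum_n_Reals; exact: sumf_mono.
Qed.


Lemma congr0_iff t d : (0 < d)%N -> (congr t 0 d = true <-> exists k, t = Nat.mul k d).
Proof.
move=> /ltP d0; rewrite /congr Z.eqb_eq Z.sub_0_r; split.
  move=> /Z.mod_divide H; have [|z Hz] := H; first lia.
  exists (Z.to_nat z). apply: Nat2Z.inj. rewrite Nat2Z.inj_mul Z2Nat.id //; nia.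
move=> [k ->]; rewrite Nat2Z.inj_mul Z.mod_mul //; lia.
Qed.

Lemma congr0 t d : (0 < d)%N -> congr t 0 d = (d %| t).
Proof.
move=> d0; apply/Bool.eq_true_iff_eq; rewrite congr0_iff //; split.
  by move=> [k ->]; apply/dvdnP; exists k.
by move=> /dvdnP [k ->]; exists k.
Qed.

Lemma congr_half t d : (0 < d)%N ->
  congr t (Z.of_nat d) (2 * d) = congr t 0 d && ~~ congr t 0 (2 * d).
Proof.
move=> /ltP d0; rewrite /congr Z.sub_0_r.
have D0 : Z.of_nat (2 * d)%N = (2 * Z.of_nat d)%Z by rewrite -multE Nat2Z.inj_mul.
rewrite D0.
have Hd : (Z.of_nat d <> 0)%Z by lia.
have H2d : (2 * Z.of_nat d <> 0)%Z by lia.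
set T := Z.of_nat t; set D := Z.of_nat d.
apply/Bool.eq_true_iff_eq; rewrite Bool.andb_true_iff Bool.negb_true_iff !Z.eqb_eq Z.eqb_neq.
rewrite !Z.mod_divide //; split.
- move=> [z Hz]; split.
    exists (2 * z + 1)%Z; lia.
  move=> [w Hw]. have : (D * (2 * w - 2 * z - 1) = 0)%Z by lia.
  move/Z.mul_eq_0 => [|]; lia.
- move=> [[a Ha] Hn]. case: (Z.Even_or_Odd a) => [[b Hb]|[b Hb]].
    by exfalso; apply: Hn; exists b; subst a; lia.
  exists b; subst a; lia.
Qed.

Section Main.
Variable d : nat.
Hypothesis d0 : (0 < d)%N.

Definition g := rho_term 0%Z d.
Definition Ld : R := / (INR d * INR (totient d)).
Definition Pn (n : nat) : R := lprod (fun p => loc p (logn p d)) (PS n).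

Lemma leb1 t : Nat.leb 1 t = (0 < t)%N.
Proof. by case: t. Qed.

Lemma g_spec t : g t = if (0 < t)%N && (d %| t) then r t else 0.
Proof. by rewrite /g /rho_term leb1 congr0. Qed.

Lemma g_nonneg t : 0 <= g t.
Proof.
rewrite g_spec; case E: ((0 < t)%N && (d %| t)); last lra.
by apply: r_nonneg; case/andP: E.
Qed.

Lemma primes_d_PS n : (d < n)%N -> forall q, prime q -> q %| d -> In q (PS n).
Proof.
move=> Hn q pq qd; apply/PS_In; split => //.
have := dvdn_leq d0 qd; lia.
Qed.

Lemma Tl_good n K t : (d < n)%N -> In t (Tl d K (PS n)) -> g t = r t.
Proof.
move=> Hn Ht.
have [t0 [_ Hdv]] := Tl_prop (PS_allprime n) (PS_NoDup n) t Ht.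
rewrite (Dfold_eq (PS_allprime n) (PS_NoDup n) d d0 (primes_d_PS _ Hn)) in Hdv.
by rewrite g_spec t0 Hdv.
Qed.

Lemma lsumc_eq p K : prime p ->
  lsum (c p) (ks d K p) = loc p (logn p d) - rfac p * qq p ^ (logn p d + (K.+1 - logn p d)) / (1 - qq p).
Proof.
move=> pp; rewrite /ks geo //.
case: (logn p d) => [|e] //=.
Qed.

Lemma lsumc_bounds p K : prime p -> 0 <= lsum (c p) (ks d K p) <= loc p (logn p d).
Proof.
move=> pp; split.
  by apply: lsum_nonneg => k; apply: c_nonneg.
rewrite lsumc_eq //.
have [q0 q1] := qq_bounds _ pp.
have : 0 <= rfac p * qq p ^ (logn p d + (K.+1 - logn p d)) / (1 - qq p).
  apply: Rle_mult_inv_pos; last lra.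
  apply: Rmult_le_pos; [exact: rfac_nonneg|apply: pow_le; lra].
lra.
Qed.

Lemma lsumc_lim p : prime p -> is_lim_seq (fun K => lsum (c p) (ks d K p)) (loc p (logn p d)).
Proof.
move=> pp; set e := logn p d.
have [q0 q1] := qq_bounds _ pp.
apply/(is_lim_seq_incr_n _ e).
have E : forall K, lsum (c p) (ks d (K + e) p) =
   loc p e - (rfac p * qq p ^ e.+1 / (1 - qq p)) * qq p ^ K.
  move=> K; rewrite lsumc_eq // -/e.
  have -> : (e + ((K + e).+1 - e) = K + e.+1)%N by lia.
  rewrite -plusE pow_add; field; lra.
apply: (is_lim_seq_ext (fun K => loc p e - (rfac p * qq p ^ e.+1 / (1 - qq p)) * qq p ^ K)).
  by move=> K; rewrite E.
have Hq : Rabs (qq p) < 1 by rewrite Rabs_pos_eq; lra.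
have H0 : is_lim_seq (fun K => (rfac p * qq p ^ e.+1 / (1 - qq p)) * qq p ^ K) 0.
  have H := is_lim_seq_scal_l _ (rfac p * qq p ^ e.+1 / (1 - qq p)) _ (is_lim_seq_geom (qq p) Hq).
  simpl in H; rewrite Rmult_0_r in H; exact H.
have := is_lim_seq_minus' _ _ _ _ (is_lim_seq_const (loc p e)) H0.
by rewrite Rminus_0_r.
Qed.

Lemma AP n : (d < n)%N -> A_partial n * Pn n = Ld.
Proof.
move=> Hn; rewrite A_eq /Pn -lprod_mult.
rewrite (lprod_ext _ (fun q => h q (logn q d))); last first.
  by move=> q /PS_In [pq _]; apply: fac_loc.
have H := H_fold (PS_allprime n) (PS_NoDup n) d d0 (primes_d_PS _ Hn).
have Hd : 0 < INR d * INR (totient d).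
  apply: Rmult_lt_0_compat; apply: lt_0_INR; apply/ltP => //; by rewrite totient_gt0.
rewrite /Ld; apply: (Rmult_eq_reg_r (INR d * INR (totient d))); last lra.
by rewrite H Rinv_l //; lra.
Qed.

Lemma Pn_pos n : 0 <= Pn n.
Proof.
rewrite /Pn; have : forall q, In q (PS n) -> prime q by move=> q /PS_In [].
elim: (PS n) => [|x s IH] H; rewrite /lprod /=; first lra.
rewrite -/(lprod _ _); apply: Rmult_le_pos; last by apply: IH => y Hy; apply: H; right.
have := lsumc_bounds x 0 (H x (or_introl erefl)); lra.
Qed.

Lemma upper N : (d <= N)%N -> sum_f_R0 g N <= Pn N.+1.
Proof.
move=> HN; rewrite sumf_lsum.
apply: (Rle_trans _ (lsum g (Tl d N (PS N.+1)))).
  apply: lsum_le_incl; [exact: g_nonneg|exact: seq_NoDup|].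
  move=> t Ht Hg.
  have [t0 dt] : (0 < t)%N /\ (d %| t).
    move: Hg; rewrite g_spec; case E: ((0 < t)%N && (d %| t)) => // _; exact/andP.
  have tN : (t <= N)%N by move: Ht => /in_seq; lia.
  apply: Tl_mem; [exact: PS_allprime|exact: PS_NoDup|exact: t0| |].
    move=> q pq qt; apply/PS_In; split => //; have := dvdn_leq t0 qt; lia.
  move=> q /PS_In [pq _]; apply/andP; split; first exact: dvdn_leq_log.
  have H1 : (logn q t < q ^ logn q t)%N by apply: ltn_expl; apply: prime_gt1.
  have H2 : (q ^ logn q t <= t)%N by apply: dvdn_leq => //; exact: pfactor_dvdnn.
  lia.
rewrite (lsum_ext _ r); last by move=> t Ht; apply: (Tl_good N.+1 N) => //; lia.
rewrite Tl_sum; [|exact: PS_allprime|exact: PS_NoDup].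
apply: lprod_le => p /PS_In [pp _]; exact: lsumc_bounds.
Qed.

Lemma list_bound (l : list nat) : exists M, forall x, In x l -> (x <= M)%N.
Proof.
elim: l => [|a l [M HM]]; first by exists 0%N.
exists (maxn a M) => x [<-|Hx]; first exact: leq_maxl.
apply: leq_trans (HM x Hx) (leq_maxr _ _).
Qed.

Lemma g_ex_series : ex_series g.
Proof.
have Hb : forall N, sum_f_R0 g N <= 4 * Ld.
  move=> N; apply: (Rle_trans _ (sum_f_R0 g (d + N))).
    exact: (sumf_mono _ _ _ g_nonneg).
  apply: (Rle_trans _ _ _ (upper (d + N) ltac:(lia))).
  have E := AP (d + N).+1 ltac:(lia).
  have HA := A_ge (d + N).+1.
  have HP := Pn_pos (d + N).+1.
  have HL : 0 <= Ld by rewrite -E; nra.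
  nra.
have Hex : ex_finite_lim_seq (sum_n g).
  apply: (ex_finite_lim_seq_incr _ (4 * Ld)).
    move=> n; rewrite !sum_n_Reals /=; have := g_nonneg n.+1; lra.
  by move=> n; rewrite sum_n_Reals.
have [l Hl] := Hex. by exists l.
Qed.

Lemma key : ArtinA * Series g = Ld.
Proof.
have Hex := g_ex_series.
set S := Series g.
have HA := Artin_ge.
have Hlow : forall n, (d < n)%N -> Pn n <= S.
  move=> n Hn.
  have Hlim := lprod_lim (fun K p => lsum (c p) (ks d K p)) (fun p => loc p (logn p d)) (PS n)
     (fun p Hp => lsumc_lim p (proj1 (proj1 (PS_In p n) Hp))).
  have Hle : forall K, lprod (fun p => lsum (c p) (ks d K p)) (PS n) <= S.
    move=> K. rewrite -Tl_sum; [|exact: PS_allprime|exact: PS_NoDup].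
    rewrite -(lsum_ext g); last by move=> t Ht; apply: (Tl_good n K).
    have [M HM] := list_bound (Tl d K (PS n)).
    apply: (Rle_trans _ (sum_f_R0 g M)); last exact: partial_le_series g_nonneg Hex.
    rewrite sumf_lsum; apply: lsum_le_incl; [exact: g_nonneg| |].
      exact: Tl_NoDup (PS_allprime n) (PS_NoDup n).
    move=> t Ht _; apply/in_seq; have := HM t Ht; lia.
  have := is_lim_seq_le _ _ _ _ Hle Hlim (is_lim_seq_const S). by [].
have H1 : Ld <= ArtinA * S.
  have Hl1 : is_lim_seq (fun k => A_partial (k + d.+1) * S) (ArtinA * S).
    apply: is_lim_seq_mult'; last exact: is_lim_seq_const.
    exact: (proj1 (is_lim_seq_incr_n A_partial d.+1 ArtinA) Artin_lim).
  have Hc : forall k, Ld <= A_partial (k + d.+1) * S.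
    move=> k; rewrite -(AP (k + d.+1)%N); last lia.
    apply: Rmult_le_compat_l; first by have := A_ge (k + d.+1); lra.
    apply: Hlow; lia.
  have := is_lim_seq_le _ _ _ _ Hc (is_lim_seq_const Ld) Hl1. by [].
have H2 : S <= Ld / ArtinA.
  have HS : is_lim_seq (fun k => sum_n g (k + d)) S.
    have Hs := Series_correct _ Hex.
    exact: (proj1 (is_lim_seq_incr_n (sum_n g) d S) Hs).
  have Hc : forall k, sum_n g (k + d) <= Ld / ArtinA.
    move=> k; rewrite sum_n_Reals.
    apply: (Rle_trans _ _ _ (upper (k + d) ltac:(lia))).
    have E := AP (k + d).+1 ltac:(lia).
    have HAk := Artin_le (k + d).+1.
    have HP := Pn_pos (k + d).+1.
    rewrite -E /Rdiv.
    apply: (Rmult_le_reg_l ArtinA); first lra.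
    have -> : ArtinA * (A_partial (k + d).+1 * Pn (k + d).+1 * / ArtinA)
            = A_partial (k + d).+1 * Pn (k + d).+1 by field; lra.
    nra.
  have := is_lim_seq_le _ _ _ _ Hc HS (is_lim_seq_const _). by [].
have : ArtinA * S <= Ld.
  have -> : Ld = ArtinA * (Ld / ArtinA) by field; lra.
  apply: Rmult_le_compat_l; lra.
lra.
Qed.


End Main.

Lemma Nat_odd_odd n : Nat.odd n = odd n.
Proof.
elim: n => [|n IH] //. rewrite Nat.odd_succ -Nat.negb_odd IH /=. by [].
Qed.

Lemma tot_odd (m : nat) : odd m -> totient (2 * m)%N = totient m.
Proof.
move=> od. rewrite totient_coprime; last by rewrite prime_coprime // dvdn2 negbK.
by rewrite mul1n.
Qed.

Lemma tot_even (m : nat) : (0 < m)%N -> ~~ odd m -> totient (2 * m)%N = (2 * totient m)%N.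
Proof.
move=> m0 ev. have p2 : prime 2 by [].
have [u [u0 [pu Ht]]] := decomp p2 m0.
have k0 : (0 < logn 2 m)%N by rewrite logn_gt0 mem_primes p2 m0 dvdn2.
set k := logn 2 m in Ht k0 *.
have Hc : forall j, coprime (2 ^ j) u by move=> j; rewrite coprimeXl // prime_coprime.
have -> : (2 * m = 2 ^ k.+1 * u)%N by rewrite Ht mulnA expnS.
rewrite Ht !totient_coprime // !totient_pfactor //.
case: k k0 {Ht Hc} => [//|k] _ /=. rewrite expnS. lia.
Qed.

Lemma rho_term_half d t : (0 < d)%N ->
  rho_term (Z.of_nat d) (2 * d) t = g d t - g (2 * d) t.
Proof.
move=> d0. have d20 : (0 < 2 * d)%N by rewrite muln_gt0.
rewrite /g /rho_term congr_half //.
have Himp : congr t 0 (2 * d) -> congr t 0 d.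
  rewrite !congr0 // => H; apply: dvdn_trans H; exact: dvdn_mull.
case: (Nat.leb 1 t); rewrite /=; last lra.
case E2: (congr t 0 (2 * d)); case E1: (congr t 0 d) => /=; try lra.
by rewrite E1 in Himp; have := Himp E2.
Qed.

Lemma final d : (0 < d)%N ->
  rho 0%Z d = / (INR d * INR (phi d)) /\
  rho (Z.of_nat d) (2 * d) =
    (if Nat.odd d then rho 0%Z (2 * d) else 3 * rho 0%Z (2 * d)).
Proof.
move=> d0. have d20 : (0 < 2 * d)%N by rewrite muln_gt0.
have K1 := key _ d0. have K2 := key _ d20.
have Hex1 := g_ex_series _ d0. have Hex2 := g_ex_series _ d20.
split; first exact: K1.
have E : rho (Z.of_nat d) (2 * d) = Ld d - Ld (2 * d).
  rewrite /rho (Series_ext _ (fun t => g d t - g (2 * d) t)); last by move=> t; apply: rho_term_half.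
  rewrite Series_minus // -K1 -K2; ring.
rewrite E /rho -/(g (2 * d)) K2 /Ld Nat_odd_odd.
have Hd : 0 < INR d by apply: lt_0_INR; apply/ltP.
have Ht : 0 < INR (totient d) by apply: lt_0_INR; apply/ltP; rewrite totient_gt0.
have -> : INR (2 * d)%N = 2 * INR d by rewrite INR_muln.
case od: (odd d).
  rewrite tot_odd //. field; lra.
rewrite tot_even ?od // INR_muln /=. field; lra.
Qed.

End M.

Open Scope R_scope.
Theorem mainTheorem9 : forall d : nat, (1 <= d)%nat ->
  rho 0%Z d = / (INR d * INR (phi d)) /\
  rho (Z.of_nat d) (2 * d) =
    (if Nat.odd d then rho 0%Z (2 * d) else 3 * rho 0%Z (2 * d)).
Proof.
intros d Hd. apply M.final. exact (ssrbool.introT ssrnat.leP Hd).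
Qed.
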